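(* Let $G$, $k\ge 3$, the choice strings $c_{i,j}$, the template string $t$, $L$ and $d$ be as in the binary construction in the context, and let $s\in\{0,1\}^L$ be a solution, i.e. $t$ and every choice string $c_{i,j}$ ($1\le i<j\le k$) have a substring of length $L$ at Hamming distance at most $d$ from $s$. Then the encoding part of $s$ contains exactly $k$ symbols $1$, and these correspond to a clique of size $k$ in $G$: for $p=1,\dots,k$ the $p$-th section of the encoding part of $s$ equals $\mathrm{number}(h_p)$ for some $h_p$, and $v_{h_1},\dots,v_{h_k}$ form a clique of size $k$ in $G$.
   Context: Let $G=(V,E)$ be an undirected simple graph with $V=\{v_1,\dots,v_n\}$ and edge set $E=\{e_1,\dots,e_m\}$, and let $k\ge 3$ be an integer; put $N=\binom{k}{2}$ and $b=nk-2k+2$. All strings are over $\{0,1\}$. For $1\le p\le n$ let $\mathrm{number}(p)=0^{p-1}10^{n-p}$. Let $\mathrm{front\_tag}=(1^{3nk}0)^{nk}$ (length $(3nk+1)nk$). Order the pairs $(i,j)$, $1\le i<j\le k$, lexicographically and let $i'$ be the position of $(i,j)$ in this order. For an edge $e$ joining $v_r,v_s$ with $r<s$ let $\mathrm{encode}(i,j,e)=(0^n)^{i-1}\,\mathrm{number}(r)\,(0^n)^{j-i-1}\,\mathrm{number}(s)\,(0^n)^{k-j}$, $\mathrm{back\_tag}(i')=0^{(i'-1)b}1^{b}0^{(N-i')b}$, and $\mathrm{block}(i,j,e)=\mathrm{front\_tag}\,\mathrm{encode}(i,j,e)\,\mathrm{back\_tag}(i')$. The choice string is $c_{i,j}=\mathrm{block}(i,j,e_1)\cdots\mathrm{block}(i,j,e_m)$.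 The template string is $t=\mathrm{front\_tag}\,1^{nk}\,0^{Nb}$. Set $L=(3nk+1)nk+nk+Nb$ and $d=nk-k$. For a string $s$ of length $L$, its encoding part is the substring of its positions $(3nk+1)nk+1,\dots,(3nk+1)nk+nk$, divided into $k$ consecutive sections of length $n$. *)

(* Defs.v *)
(* binary strings are [seq bool] (false = 0, true = 1).
   Vertices are v_1..v_n, referred to by their index in 1..n.
   The edge list E = [e_1; ...; e_m] is a list of pairs (r, s) with 1 <= r < s <= n. *)
From mathcomp Require Import all_boot.
Set Implicit Arguments. Unset Strict Implicit. Unset Printing Implicit Defensive.

Definition zeros (l : nat) : seq bool := nseq l false.
Definition ones (l : nat) : seq bool := nseq l true.

Definition numstr (n p : nat) : seq bool := zeros (p - 1) ++ [:: true] ++ zeros (n - p).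

Definition front_tag (n k : nat) : seq bool :=
  flatten (nseq (n * k) (ones (3 * n * k) ++ [:: false])).

Definition Npairs (k : nat) : nat := 'C(k, 2).
Definition bval (n k : nat) : nat := n * k - 2 * k + 2.

Definition pairs (k : nat) : seq (nat * nat) :=
  [seq (i, j) | i <- iota 1 k, j <- iota i.+1 (k - i)].

Definition pair_pos (k i j : nat) : nat := (index (i, j) (pairs k)).+1.

Definition encode (n k i j : nat) (e : nat * nat) : seq bool :=
  flatten (nseq (i - 1) (zeros n)) ++ numstr n e.1 ++
  flatten (nseq (j - i - 1) (zeros n)) ++ numstr n e.2 ++
  flatten (nseq (k - j) (zeros n)).

Definition back_tag (n k i' : nat) : seq bool :=
  zeros ((i' - 1) * bval n k) ++ ones (bval n k) ++ zeros ((Npairs k - i') * bval n k).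

Definition block (n k i j : nat) (e : nat * nat) : seq bool :=
  front_tag n k ++ encode n k i j e ++ back_tag n k (pair_pos k i j).

Definition choice_string (n k : nat) (E : seq (nat * nat)) (i j : nat) : seq bool :=
  flatten [seq block n k i j e | e <- E].

Definition template (n k : nat) : seq bool :=
  front_tag n k ++ ones (n * k) ++ zeros (Npairs k * bval n k).

Definition Llen (n k : nat) : nat :=
  (3 * n * k + 1) * (n * k) + n * k + Npairs k * bval n k.
Definition dval (n k : nat) : nat := n * k - k.

Definition hamming (u v : seq bool) : nat :=
  count (fun p : bool * bool => p.1 != p.2) (zip u v).

Definition has_close_substring (s w : seq bool) (d : nat) : Prop :=
  exists off, off + size s <= size w /\
              hamming s (take (size s) (drop off w)) <= d.

Definition is_solution (n k : nat) (E : seq (nat * nat)) (s : seq bool) : Prop :=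
  size s = Llen n k /\
  has_close_substring s (template n k) (dval n k) /\
  (forall i j, 1 <= i -> i < j -> j <= k ->
     has_close_substring s (choice_string n k E i j) (dval n k)).

Definition encoding_part (n k : nat) (s : seq bool) : seq bool :=
  take (n * k) (drop ((3 * n * k + 1) * (n * k)) s).

Definition section (n k p : nat) (s : seq bool) : seq bool :=
  take n (drop ((p - 1) * n) (encoding_part n k s)).

Definition simple_graph (n : nat) (E : seq (nat * nat)) : Prop :=
  uniq E /\ forall e, e \in E -> 1 <= e.1 /\ e.1 < e.2 /\ e.2 <= n.

Definition adjacent (E : seq (nat * nat)) (x y : nat) : bool :=
  ((x, y) \in E) || ((y, x) \in E).

(* Main.v *)
Require Import Defs.
From mathcomp Require Import all_boot zify.
Set Implicit Arguments. Unset Strict Implicit. Unset Printing Implicit Defensive.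

Definition Ssum (f : nat -> nat) a b := \sum_(a <= x < b) f x.

Lemma S_split f a m b : a <= m -> m <= b -> Ssum f a b = Ssum f a m + Ssum f m b.
Proof. by move=> h1 h2; rewrite /Ssum; apply: big_cat_nat. Qed.

Lemma S_le f g a b : (forall x, a <= x < b -> f x <= g x) -> Ssum f a b <= Ssum g a b.
Proof. by move=> H; rewrite /Ssum big_nat [X in _ <= X]big_nat; apply: leq_sum => x /H. Qed.

Lemma S_ext f g a b : (forall x, a <= x < b -> f x = g x) -> Ssum f a b = Ssum g a b.
Proof. by move=> H; apply/eqP; rewrite eqn_leq !S_le // => x /H ->. Qed.

Lemma S_shift f a b c : Ssum f (a + c) (b + c) = Ssum (fun x => f (x + c)) a b.
Proof. by rewrite /Ssum big_addn addnK. Qed.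

Lemma S_add f g a b : Ssum (fun x => f x + g x) a b = Ssum f a b + Ssum g a b.
Proof. by rewrite /Ssum big_split. Qed.

Lemma S_const1 a b : Ssum (fun _ => 1) a b = b - a.
Proof. by rewrite /Ssum sum_nat_const_nat muln1. Qed.

Lemma S_sub f a b a' b' : a' <= a -> a <= b -> b <= b' -> Ssum f a b <= Ssum f a' b'.
Proof.
move=> h1 h2 h3; rewrite (S_split f h1 (leq_trans h2 h3)) (S_split f h2 h3).
lia.
Qed.

Lemma S_shift' f a b : a <= b -> Ssum f a b = Ssum (fun y => f (y + a)) 0 (b - a).
Proof. by move=> h; rewrite -{1}(add0n a) -{1}(subnK h) S_shift. Qed.

Lemma rho_dvd P x : 0 < P -> (x %% P == P.-1) = (P %| x.+1).
Proof.
move=> P0; rewrite /dvdn -addn1 -modnDml.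
have := ltn_pmod x P0.
case: (ltnP (x %% P).+1 P) => h1 h2.
- rewrite addn1 (modn_small h1); lia.
- have -> : x %% P + 1 = P by lia.
  rewrite modnn; lia.
Qed.

Definition rho P x : nat := (x %% P == P.-1).

Lemma S_rho0 P b : 0 < P -> Ssum (rho P) 0 b = b %/ P.
Proof.
move=> P0; elim: b => [|b IH]; first by rewrite /Ssum big_geq ?div0n.
rewrite /Ssum big_nat_recr //= -/(Ssum _ _ _) IH divnS // /rho rho_dvd //; lia.
Qed.

Lemma S_rho P a b : 0 < P -> a <= b -> Ssum (rho P) a b = b %/ P - a %/ P.
Proof.
move=> P0 ab; have := S_split (rho P) (leq0n a) ab.
rewrite !S_rho0 //; lia.
Qed.

Lemma shift_mod P c y : 0 < c < P -> y %% P = P.-1 -> (y + c) %% P != P.-1.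
Proof.
move=> /andP [c0 cP] hy; rewrite -modnDml hy.
have -> : P.-1 + c = P + c.-1 by lia.
rewrite modnDl modn_small; lia.
Qed.

Definition frontf P x : bool := x %% P != P.-1.
Definition tf M P F x : bool := if x < F then frontf P x else x < F + M.
Definition bv P F (g : nat -> bool) u : bool := if u < F then frontf P u else g (u - F).
Definition Wf P F L d (g1 g2 : nat -> bool) x :=
  if x < L - d then bv P F g1 (d + x) else bv P F g2 (x - (L - d)).

Lemma frontf_rho P x : frontf P x + rho P x = 1.
Proof. by rewrite /frontf /rho; case: eqP. Qed.

Lemma rho_pair P d v : 0 < P -> d %% P != 0 ->
  rho P v + rho P (v + d) <= (frontf P v != frontf P (v + d)).
Proof.
move=> P0 dn0.
have key : forall y, y %% P = P.-1 -> (y + d) %% P != P.-1.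
  move=> y hy; rewrite -modnDmr; apply: shift_mod => //.
  by rewrite lt0n dn0 ltn_pmod.
rewrite /rho /frontf.
case: (eqVneq (v %% P) P.-1) => h1.
- by move: (key _ h1); case: eqP.
- case: (eqVneq ((v + d) %% P) P.-1) => h2 //=.
Qed.

Definition hide (X : Prop) := X.
Lemma unhide X : hide X -> X. Proof. by []. Qed.

Lemma num_F1 N b : 3 <= N -> 2 <= b -> 2 * N + 3 * b <= N * b + 6.
Proof. move=> h1 h2; nia. Qed.

Lemma num_z N b M z P : P = 3 * M + 1 -> b <= M -> 0 < b -> z * P <= N * b -> 3 * z <= N.
Proof.
move=> eP bM b0 h.
have : 3 * z * b <= N * b.
  apply: leq_trans h; rewrite eP; nia.
by rewrite leq_pmul2r.
Qed.

Lemma align M k N b P F A L d (g1 g2 : nat -> bool) :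
  P = 3 * M + 1 -> F = M * P -> A = M + N * b -> L = F + A ->
  b = M - 2 * k + 2 -> 2 * k <= M -> 3 <= k -> k <= N -> 3 <= N ->
  Ssum g1 0 A <= b + 2 -> Ssum g2 0 A <= b + 2 -> 0 < d < L ->
  2 * M - 2 * k < Ssum (fun x => Wf P F L d g1 g2 x != tf M P F x) 0 L.
Proof.
move=> eP eF eA eL eb h2k h3k hkN h3N hg1 hg2 /andP [d0 dL].
set mis := fun x => _.
have P0 : 0 < P by lia.
have M1 : 1 <= M by lia.
have PF : P <= F by rewrite eF leq_pmull.
have frontP : forall x, x < 3 * M -> frontf P x.
  move=> x hx; rewrite /frontf modn_small; lia.
case: (leqP F d) => hdF.
- (* window starts in the tail *)
  set r := L - d.
  have r0 : 0 < r by lia.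
  have rA : r <= A by lia.
  case: (leqP (3 * M) r) => h3r.
  + have H1 : Ssum (fun _ => 1) 0 (3 * M) <=
              Ssum mis 0 (3 * M) + Ssum (fun x => g1 (x + (d - F))) 0 (3 * M).
      rewrite -S_add; apply: S_le => x /andP [_ hx].
      rewrite /mis /Wf ifT; last by lia.
      rewrite /bv ifF; last by lia.
      rewrite /tf ifT; last by lia.
      rewrite frontP // (_ : d + x - F = x + (d - F)); last by lia.
      by case: (g1 _).
    have H2 : Ssum (fun x => g1 (x + (d - F))) 0 (3 * M) <= b + 2.
      rewrite -(S_shift (fun y => g1 y)) add0n; apply: leq_trans hg1; apply: S_sub; lia.
    have H3 : Ssum mis 0 (3 * M) <= Ssum mis 0 L by apply: S_sub; lia.
    move: H1; rewrite S_const1; lia.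
  + have rP : r < P by lia.
    have E1 : Ssum mis r F = Ssum (fun y => mis (y + r)) 0 (F - r).
      by rewrite -S_shift add0n subnK //; lia.
    have H1 : Ssum (fun y => rho P y + rho P (y + r)) 0 (F - r) <= Ssum mis r F.
      rewrite E1; apply: S_le => y /andP [_ hy].
      rewrite /mis /Wf ifF; last by lia.
      rewrite /bv ifT; last by lia.
      rewrite /tf ifT; last by lia.
      rewrite addnK; apply: rho_pair => //; rewrite modn_small //; lia.
    rewrite S_add (S_rho0 _ P0) in H1.
    have E2 : Ssum (fun y => rho P (y + r)) 0 (F - r) = Ssum (rho P) r F.
      by rewrite -S_shift add0n subnK //; lia.
    rewrite E2 S_rho // in H1; last by lia.
    have FM : F %/ P = M by rewrite eF mulnK.
    have r0P : r %/ P = 0 by rewrite divn_small.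
    have Fr : M - 1 <= (F - r) %/ P.
      by rewrite leq_divRL // mulnBl mul1n eF; lia.
    have H3 : Ssum mis r F <= Ssum mis 0 L by apply: S_sub; lia.
    lia.
- (* window starts inside the front tag *)
  set a := d %/ P. set c := d %% P.
  have edc : d = a * P + c by rewrite /a /c -divn_eq.
  have cP : c < P by rewrite ltn_pmod.
  have aM : a < M by rewrite /a ltn_divLR // -eF.
  have aPM : a.+1 * P <= M * P by rewrite leq_mul2r aM orbT.
  have FL : F <= L by lia.
  have ha : hide (d %/ P = a) by [].
  have hc : hide (d %% P = c) by [].
  clearbody a c.
  have X1 : c != 0 -> Ssum (fun y => rho P y + rho P (y + d)) 0 (F - d) <= Ssum mis 0 (F - d).
    move=> c0; apply: S_le => y /andP [_ hy].
    rewrite /mis /Wf ifT; last by lia.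
    rewrite /bv ifT; last by lia.
    rewrite /tf ifT; last by lia.
    rewrite eq_sym (addnC d y); apply: rho_pair => //; by rewrite (unhide hc).
  have ES1 : Ssum (fun y => rho P y + rho P (y + d)) 0 (F - d) = (F - d) %/ P + (M - a).
    rewrite S_add S_rho0 //; congr (_ + _).
    rewrite -S_shift add0n subnK; last by lia.
    by rewrite S_rho //; [move: (unhide ha) => ->; rewrite eF mulnK | lia].
  set Q := (F - d) %/ P.
  have Q1 : M - a - 1 <= Q.
    rewrite /Q leq_divRL // !mulnBl mul1n eF; move: aPM; rewrite mulSn; lia.
  have QM : c = 0 -> M - a <= Q.
    move=> c0; rewrite /Q leq_divRL // mulnBl eF edc c0 addn0; lia.
  have hQ : hide ((F - d) %/ P = Q) by [].
  clearbody Q.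
  have HX1 : Ssum mis 0 (F - d) <= Ssum mis 0 L by apply: S_sub; lia.
  case: (boolP ((c != 0) && (a < k))) => [/andP [c0 ak] | hca].
    move: (X1 c0); rewrite ES1 (unhide hQ); lia.
  have a1 : 1 <= a.
    move: hca; rewrite negb_and negbK -leqNgt; case/orP => [/eqP c0 | //]; last by lia.
    case: (posnP a) => [a0|//]; move: d0; rewrite edc c0 a0 mul0n; lia.
  case: (leqP d (N * b)) => hdN.
  + have E3 : Ssum mis (L - d) L = Ssum (fun y => frontf P y) 0 d.
      rewrite -{1}(add0n (L - d)) -{2}(subnKC (ltnW dL)) S_shift.
      apply: S_ext => y /andP [_ hy].
      rewrite /mis /Wf ifF; last by lia.
      rewrite addnK /bv ifT; last by lia.
      rewrite /tf ifF; last by lia.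
      rewrite (_ : (y + (L - d) < F + M) = false); last by lia.
      by case: (frontf P y).
    have E4 : Ssum (fun y => frontf P y) 0 d + a = d.
      rewrite -(unhide ha) -S_rho0 // -S_add -{2}(subn0 d) -S_const1.
      by apply: S_ext => y _; rewrite frontf_rho.
    have H5 : Ssum mis (L - d) L <= Ssum mis 0 L by apply: S_sub; lia.
    have H6 : 3 * M <= a * (3 * M) by rewrite leq_pmull.
    have H7 : a * P = a * (3 * M) + a by rewrite eP mulnDr muln1.
    lia.
  + set z := (N * b) %/ P.
    have hz : 3 * z <= N.
      apply: (@num_z N b M z P eP); [lia | lia | exact: leq_divM].
    have hzd : hide ((N * b) %/ P = z) by [].
    clearbody z.
    have E2 : Ssum mis (F - d) (L - d) = Ssum (fun y => mis (y + (F - d))) 0 A.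
      by rewrite -{1}(add0n (F - d)) (_ : L - d = A + (F - d)) ?S_shift //; lia.
    have H2 : Ssum (fun _ => 1) 0 A <=
       Ssum (fun y => mis (y + (F - d)) + g1 y + rho P (y + (F - d))) 0 A.
      apply: S_le => y /andP [_ hy].
      rewrite /mis /Wf ifT; last by lia.
      rewrite (_ : d + (y + (F - d)) = y + F); last by lia.
      rewrite /bv ifF; last by lia.
      rewrite addnK /tf; case: ifP => _.
        by move: (frontf_rho P (y + (F - d))); case: (g1 y); case: (frontf P _) => /=; lia.
      rewrite (_ : (y + (F - d) < F + M) = true); last by lia.
      by case: (g1 y) => /=; lia.
    rewrite !S_add S_const1 -E2 in H2.
    have E2' : Ssum (fun y => rho P (y + (F - d))) 0 A = (L - d) %/ P - Q.
      rewrite -{1}(add0n (F - d)) (_ : A = (L - d) - (F - d)); last by lia.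
      by rewrite -S_shift add0n subnK ?S_rho ?(unhide hQ) //; lia.
    have LdP : (L - d) %/ P <= M.
      by rewrite -ltnS ltn_divLR // mulSn -eF; lia.
    rewrite E2' in H2.
    move: LdP H2 E2'; generalize ((L - d) %/ P) => Ld LdP H2 E2'.
    have E5 : Ssum mis (F + M) L = Ssum (fun y => frontf P (y + (d - N * b))) 0 (N * b).
      rewrite -{1}(add0n (F + M)) (_ : L = N * b + (F + M)); last by lia.
      rewrite S_shift; apply: S_ext => y /andP [_ hy].
      rewrite /mis /Wf ifF; last by lia.
      rewrite (_ : y + (F + M) - (L - d) = y + (d - N * b)); last by lia.
      rewrite /bv ifT; last by lia.
      rewrite /tf ifF; last by lia.
      rewrite (_ : (y + (F + M) < F + M) = false); last by lia.
      by case: (frontf P _).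
    have E6 : Ssum (fun y => frontf P (y + (d - N * b))) 0 (N * b) +
              (d %/ P - (d - N * b) %/ P) = N * b.
      rewrite -(@S_rho P (d - N * b) d P0 (leq_subr _ _)).
      rewrite (@S_shift' _ (d - N * b) d (leq_subr _ _)) (subKn (ltnW hdN)) -S_add.
      apply: (@eq_trans _ _ (Ssum (fun _ => 1) 0 (N * b))); last by rewrite S_const1 subn0.
      by apply: S_ext => y _; rewrite frontf_rho.
    have E7 : d %/ P <= (d - N * b) %/ P + z + 1.
      rewrite -{1}(subnK (ltnW hdN)) divnD // (unhide hzd); case: (P <= _); lia.
    rewrite (unhide ha) in E6 E7.
    move: E6 E7; generalize ((d - N * b) %/ P) => dN E6 E7.
    have HS : Ssum mis 0 (F - d) + Ssum mis (F - d) (L - d) + Ssum mis (F + M) L <= Ssum mis 0 L.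
      have l1 : F - d <= L - d by lia.
      have l2 : L - d <= F + M by lia.
      have l3 : F + M <= L by lia.
      have s1 := @S_split mis 0 (L - d) L (leq0n _) (leq_subr _ _).
      have s2 := @S_split mis 0 (F - d) (L - d) (leq0n _) l1.
      have s3 := @S_split mis (L - d) (F + M) L l2 l3.
      lia.
    have F1 := @num_F1 N b h3N (_ : 2 <= b).
    have b2 : 2 <= b by lia.
    move: (F1 b2) => {F1} F1.
    case: (eqVneq c 0) => c0.
      move: (QM c0) => QM'; lia.
    move: (X1 c0); rewrite ES1 (unhide hQ) => X1'.
    lia.
Qed.

Lemma S_zero f a b : (forall x, a <= x < b -> f x = 0) -> Ssum f a b = 0.
Proof. by move=> H; rewrite /Ssum big_nat big1 // => x /H. Qed.

Lemma S_one f a : Ssum f a a.+1 = f a.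
Proof. by rewrite /Ssum big_nat1. Qed.

Lemma S_delta f p T : p < T -> Ssum (fun y => f y * (y == p)) 0 T = f p.
Proof.
move=> pT.
rewrite (S_split _ (leq0n p) (ltnW pT)) (S_split _ (leqnSn p) pT) S_one eqxx muln1.
rewrite !S_zero ?addn0 // => x /andP [h1 h2]; rewrite (_ : (x == p) = false) ?muln0 //; lia.
Qed.

Lemma S_delta1 p T : p < T -> Ssum (fun y => y == p) 0 T = 1.
Proof.
move=> pT; rewrite -(S_delta (fun _ => 1) pT); apply: S_ext => y _; by rewrite mul1n.
Qed.

Lemma S_ind f lo hi T : lo <= hi -> hi <= T ->
  Ssum (fun z => f z * ((lo <= z) && (z < hi))) 0 T = Ssum f lo hi.
Proof.
move=> h1 h2.
rewrite (S_split _ (leq0n lo) (leq_trans h1 h2)) (S_split _ h1 h2).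
rewrite (S_zero (a := 0)) ?(S_zero (a := hi)) => [|x /andP [x1 x2]|x /andP [x1 x2]].
- rewrite add0n addn0; apply: S_ext => x /andP [-> ->]; by rewrite muln1.
- by rewrite (_ : (lo <= x) && (x < hi) = false) ?muln0 //; lia.
- by rewrite (_ : (lo <= x) && (x < hi) = false) ?muln0 //; lia.
Qed.

Lemma pw_enc (a : bool) (y p1 p2 : nat) : p1 != p2 ->
  (a != ((y == p1) || (y == p2))) + (a * (y == p1) + a * (y == p2)) + (a * (y == p1) + a * (y == p2))
  = a + ((y == p1) + (y == p2)).
Proof.
move=> h; case: a; case: (eqVneq y p1) => [e1|n1]; case: (eqVneq y p2) => [e2|n2] //=;
  by move: h; rewrite -e1 -e2 eqxx.
Qed.

Definition encf2 (p1 p2 y : nat) : bool := (y == p1) || (y == p2).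
Definition backf b i' z : bool := ((i'.-1) * b <= z) && (z < i' * b).
Definition blkf M P F p1 p2 b i' x : bool :=
  if x < F then frontf P x else if x < F + M then encf2 p1 p2 (x - F)
  else backf b i' (x - F - M).

Lemma S_split3 f F M L : F + M <= L ->
  Ssum f 0 L = Ssum f 0 F + Ssum (fun y => f (y + F)) 0 M + Ssum (fun z => f (z + (F + M))) 0 (L - (F + M)).
Proof.
move=> h.
rewrite (S_split f (leq0n F) (leq_trans (leq_addr M F) h)) (S_split f (leq_addr M F) h).
by rewrite (S_shift' f (leq_addr M F)) (S_shift' f h) addKn addnA.
Qed.

Lemma pair_info M k N b P F L p1 p2 i' (sf : nat -> bool) :
  L = F + M + N * b -> b = M - 2 * k + 2 -> 2 * k <= M -> p1 < M -> p2 < M -> p1 != p2 ->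
  0 < i' <= N ->
  Ssum (fun x => sf x != tf M P F x) 0 L <= M - k ->
  Ssum (fun x => sf x != blkf M P F p1 p2 b i' x) 0 L <= M - k ->
  [/\ sf (p1 + F), sf (p2 + F),
      Ssum (fun y => sf (y + F)) 0 M = k + Ssum (fun z => sf (z + (F + M))) 0 (N * b) &
      Ssum (fun z => sf (z + (F + M))) 0 (N * b) =
      Ssum (fun z => sf (z + (F + M))) (i'.-1 * b) (i' * b)].
Proof.
move=> eL eb h2k p1M p2M p12 /andP [i0 iN] HT HB.
have FML : F + M <= L by lia.
have eNb : L - (F + M) = N * b by lia.
rewrite (S_split3 _ FML) eNb in HT.
rewrite (S_split3 _ FML) eNb in HB.
set fd := Ssum _ 0 F in HT.
have EB0 : Ssum (fun x => sf x != blkf M P F p1 p2 b i' x) 0 F = fd.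
  apply: S_ext => x /andP [_ hx]; by rewrite /blkf /tf !ifT.
rewrite EB0 in HB.
have ET1 : Ssum (fun y => sf (y + F) != tf M P F (y + F)) 0 M = Ssum (fun y => ~~ sf (y + F)) 0 M.
  apply: S_ext => y /andP [_ hy]; rewrite /tf ifF; last by lia.
  by rewrite (_ : y + F < F + M = true); [case: (sf _) | lia].
have ET2 : Ssum (fun z => sf (z + (F + M)) != tf M P F (z + (F + M))) 0 (N * b) =
           Ssum (fun z => sf (z + (F + M))) 0 (N * b).
  apply: S_ext => z _; rewrite /tf ifF; last by lia.
  by rewrite (_ : z + (F + M) < F + M = false); [case: (sf _) | lia].
have EB1 : Ssum (fun y => sf (y + F) != blkf M P F p1 p2 b i' (y + F)) 0 M =
           Ssum (fun y => sf (y + F) != encf2 p1 p2 y) 0 M.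
  apply: S_ext => y /andP [_ hy]; rewrite /blkf ifF; last by lia.
  by rewrite ifT ?addnK //; lia.
have EB2 : Ssum (fun z => sf (z + (F + M)) != blkf M P F p1 p2 b i' (z + (F + M))) 0 (N * b) =
           Ssum (fun z => sf (z + (F + M)) != backf b i' z) 0 (N * b).
  apply: S_ext => z _; rewrite /blkf ifF; last by lia.
  by rewrite ifF ?addnK -?subnDA ?addnK //; lia.
rewrite ET1 ET2 in HT; rewrite EB1 EB2 in HB.
set o := Ssum (fun y => sf (y + F)) 0 M.
set ob := Ssum (fun z => sf (z + (F + M))) 0 (N * b).
set y' := Ssum (fun z => sf (z + (F + M))) (i'.-1 * b) (i' * b).
have EO : Ssum (fun y => ~~ sf (y + F)) 0 M + o = M.
  rewrite /o -S_add (S_ext (g := fun _ => 1)) ?S_const1 ?subn0 // => y _.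
  by case: (sf _).
have EE : Ssum (fun y => sf (y + F) != encf2 p1 p2 y) 0 M +
          (sf (p1 + F) + sf (p2 + F)) + (sf (p1 + F) + sf (p2 + F)) = o + 2.
  have := @S_ext (fun y => (sf (y + F) != encf2 p1 p2 y) +
                   (sf (y + F) * (y == p1) + sf (y + F) * (y == p2)) +
                   (sf (y + F) * (y == p1) + sf (y + F) * (y == p2)))
                 (fun y => sf (y + F) + ((y == p1) + (y == p2))) 0 M.
  rewrite !S_add !S_delta ?S_delta1 // => <- // y _.
  by rewrite /encf2 pw_enc.
have ei : i' * b = i'.-1 * b + b by rewrite -{1}(prednK i0) mulSn addnC.
have Ebk : Ssum (fun z => 1 * backf b i' z) 0 (N * b) = b.
  rewrite /backf S_ind ?S_const1; [lia | lia | ].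
  by rewrite leq_mul2r iN orbT.
have Ebk' : Ssum (fun z => backf b i' z) 0 (N * b) = b.
  by apply: (eq_trans _ Ebk); apply: S_ext => z _; rewrite mul1n.
have Ey : Ssum (fun z => sf (z + (F + M)) * backf b i' z) 0 (N * b) = y'.
  by rewrite /backf S_ind // ?leq_mul2r ?iN ?orbT //; lia.
have EK : Ssum (fun z => sf (z + (F + M)) != backf b i' z) 0 (N * b) + y' + y' = ob + b.
  have := @S_ext (fun z => (sf (z + (F + M)) != backf b i' z) +
                   sf (z + (F + M)) * backf b i' z + sf (z + (F + M)) * backf b i' z)
                 (fun z => sf (z + (F + M)) + backf b i' z) 0 (N * b).
  rewrite !S_add Ey Ebk' => <- // z _.
  by case: (sf _); case: (backf _ _ _).
have Hy : y' <= ob.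
  have l1 : i'.-1 * b <= i' * b by lia.
  have l2 : i' * b <= N * b by rewrite leq_mul2r iN orbT.
  by rewrite /y' /ob; apply: S_sub.
have s1 : sf (p1 + F) <= 1 by case: (sf _).
have s2 : sf (p2 + F) <= 1 by case: (sf _).
move: HT; rewrite -/ob => HT.
have h12 : sf (p1 + F) + sf (p2 + F) = 2 by lia.
have h4 : ob = y' by lia.
have h3 : o = k + ob by lia.
split => //.
- by move: h12 s2; case: (sf (p1 + F)) => //=; lia.
- by move: h12 s1; case: (sf (p2 + F)) => //=; lia.
Qed.

Lemma size_flatten_nseq (u : seq bool) r : size (flatten (nseq r u)) = r * size u.
Proof. by elim: r => //= r IH; rewrite size_cat IH mulSn. Qed.

Lemma nth_flatten_nseq (u : seq bool) r x :
  nth false (flatten (nseq r u)) x = if x < r * size u then nth false u (x %% size u) else false.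
Proof.
elim: r x => [|r IH] x /=; first by rewrite nth_nil.
rewrite nth_cat; case: ltnP => hx.
  by rewrite modn_small // ifT //; rewrite mulSn; lia.
rewrite IH (_ : x %% size u = (x - size u) %% size u); last by rewrite -{1}(subnK hx) modnDr.
congr (if _ then _ else _); rewrite mulSn; lia.
Qed.

Lemma flatten_zeros r n : flatten (nseq r (zeros n)) = zeros (r * n).
Proof. by elim: r => //= r IH; rewrite IH /zeros -nseqD mulSn. Qed.

Lemma zerosA a b (s : seq bool) : zeros a ++ (zeros b ++ s) = zeros (a + b) ++ s.
Proof. by rewrite catA /zeros -nseqD. Qed.

Lemma nth_zeros a y : nth false (zeros a) y = false.
Proof. by rewrite nth_nseq; case: ifP. Qed.

Lemma nth_ones a y : nth false (ones a) y = (y < a).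
Proof. by rewrite nth_nseq; case: ifP. Qed.

Lemma nth_zeros_true a (s : seq bool) y :
  nth false (zeros a ++ true :: s) y =
  if y < a then false else if y == a then true else nth false s (y - a).-1.
Proof.
rewrite nth_cat size_nseq nth_zeros; case: ltnP => // h.
case: eqP => [->|ne]; first by rewrite subnn.
have -> : y - a = (y - a).-1.+1 by lia.
by [].
Qed.

Lemma nth_front_gen p r x :
  nth false (flatten (nseq r (ones p ++ [:: false]))) x =
  if x < (p + 1) * r then frontf (p + 1) x else false.
Proof.
rewrite nth_flatten_nseq size_cat size_nseq /= addn1 mulnC.
case: ifP => // _; rewrite /frontf nth_cat size_nseq nth_nseq.
have h2 := ltn_pmod x (ltn0Sn p).
case: (ltnP (x %% p.+1) p) => h1.
  by case: (eqVneq (x %% p.+1) p.+1.-1) => [e|//]; lia.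
have e : x %% p.+1 = p by lia.
by rewrite e subnn /= eqxx.
Qed.

Lemma size_front n k : size (front_tag n k) = (3 * n * k + 1) * (n * k).
Proof. by rewrite /front_tag size_flatten_nseq size_cat !size_nseq /= addn1 mulnC. Qed.

Lemma nth_front n k x :
  nth false (front_tag n k) x =
  if x < (3 * n * k + 1) * (n * k) then frontf (3 * n * k + 1) x else false.
Proof. exact: nth_front_gen. Qed.

Lemma nth_template n k x :
  nth false (template n k) x =
  tf (n * k) (3 * n * k + 1) ((3 * n * k + 1) * (n * k)) x.
Proof.
rewrite /template nth_cat size_front nth_front /tf; case: ifP => [->|h] //.
rewrite nth_cat size_nseq nth_ones nth_zeros; case: ifP => h2; first by lia.
by apply/esym/negbTE; lia.
Qed.

Lemma size_template n k : size (template n k) = Llen n k.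
Proof. by rewrite /template /Llen !size_cat size_front !size_nseq addnA. Qed.

Lemma nth_flatten_unif (ss : seq (seq bool)) L y : 0 < L -> all (fun u => size u == L) ss ->
  nth false (flatten ss) y = nth false (nth [::] ss (y %/ L)) (y %% L).
Proof.
move=> L0; elim: ss y => [|u ss IH] y /=; first by rewrite !nth_nil.
case/andP => /eqP su hss; rewrite nth_cat su; case: ltnP => hy.
  by rewrite divn_small // modn_small.
rewrite IH //; move: (y - L) (subnK hy) => z <-.
by rewrite modnDr divnDr ?dvdnn // divnn L0 addn1.
Qed.

Lemma size_flatten_unif (ss : seq (seq bool)) L : all (fun u => size u == L) ss ->
  size (flatten ss) = size ss * L.
Proof.
elim: ss => [|u ss IH] //= /andP [/eqP su hss]; by rewrite size_cat IH // su mulSn.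
Qed.

Lemma S_nth_size (s : seq bool) : Ssum (fun v => nth false s v) 0 (size s) = count id s.
Proof.
elim: s => [|a s IH]; first by rewrite /Ssum big_geq.
rewrite /= (S_split _ (leq0n 1) (ltn0Sn _)) S_one (S_shift' _ (ltn0Sn _)) subn1 /=.
rewrite -IH; congr (_ + _); apply: S_ext => v _; by rewrite addn1.
Qed.

Lemma S_nth_count (s : seq bool) T : Ssum (fun v => nth false s v) 0 T <= count id s.
Proof.
rewrite -S_nth_size; case: (leqP T (size s)) => h; first by apply: S_sub.
rewrite (S_split _ (leq0n (size s)) (ltnW h)) (S_zero (a := size s)) ?addn0 //.
by move=> x /andP [h1 _]; rewrite nth_default.
Qed.

Lemma hamming_S (u v : seq bool) : size u = size v ->
  hamming u v = Ssum (fun x => nth false u x != nth false v x) 0 (size u).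
Proof.
elim: u v => [|a u IH] [|b v] //=; first by rewrite /hamming /Ssum big_geq.
move=> [e]; rewrite /hamming /= -/(hamming u v) IH //.
rewrite (S_split _ (leq0n 1) (ltn0Sn _)) S_one (S_shift' _ (ltn0Sn _)) subn1 /=.
congr (_ + _); apply: S_ext => x _; by rewrite addn1.
Qed.

Lemma size_numstr n p : 1 <= p <= n -> size (numstr n p) = n.
Proof. move=> h; rewrite /numstr !size_cat !size_nseq /=; lia. Qed.

Lemma count_numstr n p : count id (numstr n p) = 1.
Proof. by rewrite /numstr !count_cat !count_nseq /= !mul0n. Qed.

Lemma nth_numstr n p y : 1 <= p <= n -> nth false (numstr n p) y = (y == p.-1).
Proof.
move=> h; rewrite /numstr /= nth_zeros_true nth_zeros.
case: ltnP => h1; first by apply/esym/negbTE; lia.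
case: eqP => [->|ne]; first by rewrite subn1 eqxx.
by apply/esym/negbTE; lia.
Qed.

Lemma encode_eq n k i j (e : nat * nat) : 1 <= i < j -> j <= k ->
  1 <= e.1 <= n -> 1 <= e.2 <= n ->
  encode n k i j e =
  zeros ((i - 1) * n + (e.1 - 1)) ++ true ::
  (zeros ((n - e.1) + (j - i - 1) * n + (e.2 - 1)) ++ true ::
  zeros ((n - e.2) + (k - j) * n)).
Proof.
move=> hij hjk he1 he2.
rewrite /encode /numstr !flatten_zeros -!catA zerosA /=.
by rewrite !zerosA /zeros -nseqD.
Qed.

Lemma mul_split x y n : x <= y -> y * n = x * n + (y - x) * n.
Proof. by move=> h; rewrite -mulnDl subnKC. Qed.

Lemma nth_two a c e' y :
  nth false (zeros a ++ true :: (zeros c ++ true :: zeros e')) y = (y == a) || (y == a + c + 1).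
Proof.
rewrite !nth_zeros_true nth_zeros.
case: ifP => h1; first by apply/esym/negbTE; lia.
case: ifP => h2; first by [].
case: ifP => h3; first by apply/esym/negbTE; lia.
case: ifP => h4; first by apply/esym/orP; right; apply/eqP; lia.
by apply/esym/negbTE; lia.
Qed.

Lemma nth_encode n k i j (e : nat * nat) y : 1 <= i < j -> j <= k ->
  1 <= e.1 <= n -> 1 <= e.2 <= n ->
  nth false (encode n k i j e) y =
  encf2 ((i - 1) * n + (e.1 - 1)) ((j - 1) * n + (e.2 - 1)) y.
Proof.
move=> hij hjk he1 he2; rewrite encode_eq // nth_two /encf2.
have E1 : (j - 1) * n = (i - 1) * n + n + (j - i - 1) * n.
  by rewrite -mulSnr -mulnDl; congr (_ * _); lia.
congr (_ || (y == _)); rewrite E1; lia.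
Qed.

Lemma size_encode n k i j (e : nat * nat) : 1 <= i < j -> j <= k ->
  1 <= e.1 <= n -> 1 <= e.2 <= n -> size (encode n k i j e) = n * k.
Proof.
move=> hij hjk he1 he2; rewrite encode_eq // size_cat /= size_cat /= !size_nseq.
have E1 : (j - 1) * n = (i - 1) * n + n + (j - i - 1) * n.
  by rewrite -mulSnr -mulnDl; congr (_ * _); lia.
have E2 : k * n = (j - 1) * n + n + (k - j) * n.
  by rewrite -mulSnr -mulnDl; congr (_ * _); lia.
rewrite (mulnC n k) E2 E1; lia.
Qed.

Lemma count_encode n k i j (e : nat * nat) : 1 <= i < j -> j <= k ->
  1 <= e.1 <= n -> 1 <= e.2 <= n -> count id (encode n k i j e) = 2.
Proof.
move=> hij hjk he1 he2; rewrite encode_eq // count_cat /= count_cat /= !count_nseq.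
by rewrite !mul0n.
Qed.

Lemma nth_back n k i' z : 1 <= i' ->
  nth false (back_tag n k i') z = backf (bval n k) i' z.
Proof.
move=> hi; rewrite /back_tag /backf nth_cat size_nseq nth_zeros nth_cat size_nseq nth_ones nth_zeros.
have E : i' * bval n k = (i' - 1) * bval n k + bval n k by rewrite -mulSnr; congr (_ * _); lia.
rewrite E subn1; case: ltnP => h1; first by apply/esym/negbTE; lia.
case: ltnP => h2; first by apply/esym/andP; split; lia.
by apply/esym/negbTE; lia.
Qed.

Lemma size_back n k i' : 1 <= i' <= Npairs k -> size (back_tag n k i') = Npairs k * bval n k.
Proof.
move=> h; rewrite /back_tag !size_cat !size_nseq.
have E : Npairs k * bval n k = (i' - 1) * bval n k + bval n k + (Npairs k - i') * bval n k.
  by rewrite -mulSnr -mulnDl; congr (_ * _); lia.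
by rewrite E addnA.
Qed.

Lemma count_back n k i' : count id (back_tag n k i') = bval n k.
Proof. by rewrite /back_tag !count_cat !count_nseq /= mul0n mul1n addn0. Qed.

Lemma mem_pairs k i j : 1 <= i -> i < j -> j <= k -> (i, j) \in pairs k.
Proof.
move=> h1 h2 h3; apply/allpairsPdep; exists i, j; split => //.
- by rewrite mem_iota; lia.
- by rewrite mem_iota; lia.
Qed.

Lemma sumn_map_add1 (g : nat -> nat) (s : seq nat) :
  sumn [seq g i + 1 | i <- s] = sumn [seq g i | i <- s] + size s.
Proof. by elim: s => //= a s ->; lia. Qed.

Lemma size_pairs k : size (pairs k) = 'C(k, 2).
Proof.
rewrite /pairs size_allpairs_dep.
rewrite (eq_map (g := fun i => k - i)); last by move=> i; rewrite size_iota.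
elim: k => // k IH.
rewrite (_ : iota 1 k.+1 = iota 1 k ++ [:: k.+1]); last by have := iotaD 1 k 1; rewrite addn1 add1n.
rewrite map_cat sumn_cat /= subnn !addn0 binS bin1 -IH.
have -> : [seq k.+1 - i | i <- iota 1 k] = [seq (k - i) + 1 | i <- iota 1 k].
  by apply/eq_in_map => i; rewrite mem_iota => hi; lia.
by rewrite sumn_map_add1 size_iota.
Qed.

Lemma pair_pos_range k i j : 1 <= i -> i < j -> j <= k -> 1 <= pair_pos k i j <= Npairs k.
Proof.
move=> h1 h2 h3; rewrite /pair_pos /Npairs -size_pairs /=.
by rewrite index_mem mem_pairs.
Qed.

Lemma pair_pos_12 k : 3 <= k -> pair_pos k 1 2 = 1 /\ pair_pos k 1 3 = 2.
Proof.
by case: k => [|[|[|k]]].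
Qed.

Definition valid_pair n k i j (e : nat * nat) :=
  [/\ 1 <= i, i < j, j <= k, 1 <= e.1 <= n & 1 <= e.2 <= n].

Lemma size_block n k i j e : valid_pair n k i j e -> size (block n k i j e) = Llen n k.
Proof.
case=> h1 h2 h3 h4 h5; have hij : 1 <= i < j by rewrite h1 h2.
rewrite /block size_cat size_front size_cat size_encode // size_back ?pair_pos_range //.
by rewrite /Llen addnA.
Qed.

Lemma nth_block_tail n k i j e u : 
  nth false (block n k i j e) u =
  bv (3 * n * k + 1) ((3 * n * k + 1) * (n * k))
     (fun v => nth false (encode n k i j e ++ back_tag n k (pair_pos k i j)) v) u.
Proof. by rewrite /block nth_cat size_front nth_front /bv; case: (u < (3 * n * k + 1) * (n * k)). Qed.

Lemma count_tail n k i j e : valid_pair n k i j e ->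
  count id (encode n k i j e ++ back_tag n k (pair_pos k i j)) = bval n k + 2.
Proof.
case=> h1 h2 h3 h4 h5; have hij : 1 <= i < j by rewrite h1 h2.
rewrite count_cat count_encode // count_back; lia.
Qed.

Lemma nth_block_full n k i j e u : valid_pair n k i j e ->
  nth false (block n k i j e) u =
  blkf (n * k) (3 * n * k + 1) ((3 * n * k + 1) * (n * k))
    ((i - 1) * n + (e.1 - 1)) ((j - 1) * n + (e.2 - 1)) (bval n k) (pair_pos k i j) u.
Proof.
move=> hv; case: (hv) => h1 h2 h3 h4 h5; have hij : 1 <= i < j by rewrite h1 h2.
have hp := pair_pos_range h1 h2 h3.
rewrite nth_block_tail /bv /blkf; case: ifP => // hu.
rewrite nth_cat size_encode // nth_encode //.
have -> : (u < (3 * n * k + 1) * (n * k) + n * k) = (u - (3 * n * k + 1) * (n * k) < n * k) by lia.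
case: ifP => // hu2.
rewrite nth_back; last by case/andP: hp.
by [].
Qed.

Lemma Npairs_ge k : 3 <= k -> 3 <= Npairs k /\ k <= Npairs k.
Proof.
move=> hk; rewrite /Npairs -(subnK hk).
elim: (k - 3) => [|m [IH1 IH2]]; first by [].
rewrite addSn binS bin1; lia.
Qed.

Lemma cf_at (ss : seq (seq bool)) L q x : 0 < L -> x < L ->
  all (fun u => size u == L) ss ->
  nth false (flatten ss) (q * L + x) = nth false (nth [::] ss q) x.
Proof.
move=> L0 xL hall; rewrite (nth_flatten_unif _ L0 hall) divnMDl // modnMDl.
by rewrite divn_small // addn0 modn_small.
Qed.

Lemma window n k E s i j :
  simple_graph n E -> 3 <= k -> 2 <= n -> size s = Llen n k -> 1 <= i -> i < j -> j <= k ->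
  Ssum (fun x => nth false s x != nth false (template n k) x) 0 (Llen n k) <= dval n k ->
  has_close_substring s (choice_string n k E i j) (dval n k) ->
  exists2 e, e \in E &
    Ssum (fun x => nth false s x != blkf (n * k) (3 * n * k + 1) ((3 * n * k + 1) * (n * k))
        ((i - 1) * n + (e.1 - 1)) ((j - 1) * n + (e.2 - 1)) (bval n k) (pair_pos k i j) x)
      0 (Llen n k) <= dval n k.
Proof.
move=> [uE hE] hk hn hs hi hij hjk HT [off [hoff hd]].
have vE : forall e, e \in E -> valid_pair n k i j e.
  move=> e /hE [h1 [h2 h3]]; split => //; [by rewrite h1 (leq_trans (ltnW h2) h3) | by rewrite (leq_trans h1 (ltnW h2)) h3].
set L := Llen n k.
move: HT; rewrite -/L => HT.
have hall : all (fun u => size u == L) [seq block n k i j e | e <- E].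
  by apply/allP => u /mapP [e he ->]; rewrite (size_block (vE _ he)).
have nk2 : 2 * k <= n * k by rewrite leq_mul2r hn orbT.
have L0 : 0 < L.
  rewrite /L /Llen; have : 0 < n * k by lia.
  by move=> h; apply: (leq_trans h); rewrite -addnA addnCA leq_addr.
have sc : size (choice_string n k E i j) = size E * L.
  by rewrite /choice_string (size_flatten_unif hall) size_map.
rewrite hs in hoff hd.
set c := choice_string n k E i j in hoff hd sc.
have HS : Ssum (fun x => nth false s x != nth false c (off + x)) 0 L <= dval n k.
  have sw : size (take L (drop off c)) = L by rewrite size_takel // size_drop; lia.
  rewrite hamming_S in hd; last by rewrite sw.
  rewrite hs in hd; apply: leq_trans hd; apply: eq_leq; apply: S_ext => x /andP [_ hx].
  by rewrite nth_take // nth_drop.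
have HW : Ssum (fun x => nth false c (off + x) !=
              tf (n * k) (3 * n * k + 1) ((3 * n * k + 1) * (n * k)) x) 0 L <= 2 * dval n k.
  apply: leq_trans (_ : Ssum (fun x => (nth false s x != nth false c (off + x)) +
                   (nth false s x != nth false (template n k) x)) 0 L <= _).
    apply: S_le => x _; rewrite nth_template.
    by case: (nth false s x); case: (nth false c _); case: (tf _ _ _ _).
  rewrite S_add; lia.
set q := off %/ L. set dl := off %% L.
have eoff : off = q * L + dl by rewrite /q /dl -divn_eq.
have dlL : dl < L by rewrite /dl ltn_pmod.
have cfq : forall x, x < L -> forall q', q' < size E ->
    nth false c (q' * L + x) = nth false (block n k i j (nth (0, 0) E q')) x.
  move=> x xL q' hq'; rewrite /c /choice_string cf_at //.
  by rewrite (nth_map (0, 0)).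
have hNk := Npairs_ge hk.
case: (eqVneq dl 0) => hdl.
  have qE : q < size E.
    by rewrite -(ltn_pmul2r L0) -sc; move: hoff; rewrite eoff hdl; lia.
  exists (nth (0, 0) E q); first by rewrite mem_nth.
  apply: leq_trans HS; apply: eq_leq; apply: S_ext => x /andP [_ hx].
  by rewrite eoff hdl addn0 cfq // (nth_block_full _ (vE _ (mem_nth _ qE))).
exfalso.
have q1E : q.+1 < size E.
  by rewrite -(ltn_pmul2r L0) -sc mulSn; move: hoff; rewrite eoff; lia.
have qE : q < size E by lia.
set e1 := nth (0, 0) E q. set e2 := nth (0, 0) E q.+1.
have he1 : e1 \in E by rewrite mem_nth.
have he2 : e2 \in E by rewrite mem_nth.
set A := n * k + Npairs k * bval n k.
have Hal : 2 * (n * k) - 2 * k <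
    Ssum (fun x => Wf (3 * n * k + 1) ((3 * n * k + 1) * (n * k)) L dl
         (fun v => nth false (encode n k i j e1 ++ back_tag n k (pair_pos k i j)) v)
         (fun v => nth false (encode n k i j e2 ++ back_tag n k (pair_pos k i j)) v) x !=
         tf (n * k) (3 * n * k + 1) ((3 * n * k + 1) * (n * k)) x) 0 L.
  apply: (@align (n * k) k (Npairs k) (bval n k) (3 * n * k + 1) ((3 * n * k + 1) * (n * k)) A L dl).
  - by rewrite mulnA.
  - by rewrite mulnC.
  - by [].
  - by rewrite /L /Llen /A addnA.
  - by [].
  - by [].
  - by [].
  - by case: hNk.
  - by case: hNk.
  - by apply: (leq_trans (S_nth_count _ _)); rewrite (count_tail (vE _ he1)).
  - by apply: (leq_trans (S_nth_count _ _)); rewrite (count_tail (vE _ he2)).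
  - by rewrite dlL andbT lt0n.
suff : Ssum (fun x => Wf (3 * n * k + 1) ((3 * n * k + 1) * (n * k)) L dl
         (fun v => nth false (encode n k i j e1 ++ back_tag n k (pair_pos k i j)) v)
         (fun v => nth false (encode n k i j e2 ++ back_tag n k (pair_pos k i j)) v) x !=
         tf (n * k) (3 * n * k + 1) ((3 * n * k + 1) * (n * k)) x) 0 L =
       Ssum (fun x => nth false c (off + x) != tf (n * k) (3 * n * k + 1) ((3 * n * k + 1) * (n * k)) x) 0 L.
  by move=> E1; move: Hal HW; rewrite E1 /dval; lia.
apply: S_ext => x /andP [_ hx]; congr (_ != _).
rewrite /Wf; case: ifP => hx2.
  by rewrite eoff -addnA cfq //; [rewrite nth_block_tail | lia].
rewrite (_ : off + x = q.+1 * L + (x - (L - dl))); last by rewrite eoff mulSn; lia.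
by rewrite cfq //; [rewrite nth_block_tail | lia].
Qed.

Lemma S_ge1 (g : nat -> bool) a b x : a <= x < b -> g x -> 1 <= Ssum g a b.
Proof.
move=> /andP [h1 h2] gx; rewrite (S_split _ h1 (ltnW h2)) (S_split _ (leqnSn x) h2) S_one gx.
lia.
Qed.

Lemma S_ge2 (g : nat -> bool) a b x y : a <= x < b -> a <= y < b -> x < y -> g x -> g y -> 2 <= Ssum g a b.
Proof.
move=> /andP [h1 h2] /andP [h3 h4] xy gx gy.
rewrite (S_split _ h1 (ltnW h2)) (S_split _ (leqnSn x) h2) S_one gx.
have : 1 <= Ssum g x.+1 b by apply: (@S_ge1 g _ _ y) => //; lia.
lia.
Qed.

Lemma uniq_one (g : nat -> bool) n x y : Ssum g 0 n <= 1 -> x < n -> y < n -> g x -> g y -> x = y.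
Proof.
move=> hS hx hy gx gy; case: (ltngtP x y) => // h.
- by have := @S_ge2 g 0 n x y; lia.
- by have := @S_ge2 g 0 n y x; lia.
Qed.

Lemma S_blocks_ge (f : nat -> bool) n a m :
  (forall p, a <= p < a + m -> 1 <= Ssum f (p * n) (p * n + n)) -> m <= Ssum f (a * n) ((a + m) * n).
Proof.
elim: m => [|m IH] H; first by [].
have h1 : m <= Ssum f (a * n) ((a + m) * n) by apply: IH => p hp; apply: H; lia.
have h2 : 1 <= Ssum f ((a + m) * n) ((a + m) * n + n) by apply: H; lia.
have h3 : a * n <= (a + m) * n by rewrite leq_mul2r leq_addr orbT.
rewrite addnS mulSnr (S_split _ h3 (leq_addr n _)); lia.
Qed.

Lemma pair_all n k E s i j :
  simple_graph n E -> 3 <= k -> 2 <= n -> size s = Llen n k -> 1 <= i -> i < j -> j <= k ->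
  Ssum (fun x => nth false s x != nth false (template n k) x) 0 (Llen n k) <= dval n k ->
  has_close_substring s (choice_string n k E i j) (dval n k) ->
  exists2 e, e \in E &
   [/\ nth false s ((i - 1) * n + (e.1 - 1) + (3 * n * k + 1) * (n * k)),
       nth false s ((j - 1) * n + (e.2 - 1) + (3 * n * k + 1) * (n * k)),
       Ssum (fun y => nth false s (y + (3 * n * k + 1) * (n * k))) 0 (n * k) =
         k + Ssum (fun z => nth false s (z + ((3 * n * k + 1) * (n * k) + n * k))) 0 (Npairs k * bval n k) &
       Ssum (fun z => nth false s (z + ((3 * n * k + 1) * (n * k) + n * k))) 0 (Npairs k * bval n k) =
       Ssum (fun z => nth false s (z + ((3 * n * k + 1) * (n * k) + n * k)))
         ((pair_pos k i j).-1 * bval n k) (pair_pos k i j * bval n k)].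
Proof.
move=> hG hk hn hs hi hij hjk HT HC.
have [e he HB] := window hG hk hn hs hi hij hjk HT HC.
exists e => //.
have [h1 [h2 h3]] := hG.2 e he.
have nk2 : 2 * k <= n * k by rewrite leq_mul2r hn orbT.
have Ei : i * n = (i - 1) * n + n by rewrite -mulSnr; congr (_ * _); lia.
have Ej : j * n = (j - 1) * n + n by rewrite -mulSnr; congr (_ * _); lia.
have ij : i * n <= (j - 1) * n by rewrite leq_mul2r; apply/orP; right; lia.
have jk : j * n <= n * k by rewrite mulnC leq_mul2l; apply/orP; right.
apply: (@pair_info (n * k) k (Npairs k) (bval n k) (3 * n * k + 1)
   ((3 * n * k + 1) * (n * k)) (Llen n k)) => //.
- by lia.
- by lia.
- by apply/negP => /eqP; lia.
- exact: pair_pos_range.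
- apply: leq_trans HT; apply: eq_leq; apply: S_ext => x _; by rewrite nth_template.
Qed.

Lemma index_numstr n u : index true (numstr n u.+1) = u.
Proof.
rewrite /numstr subn1 /= index_cat.
have -> : (true \in zeros u) = false by rewrite /zeros mem_nseq andbF.
by rewrite size_nseq /= addn0.
Qed.

Notation FF n k := ((3 * n * k + 1) * (n * k)).

Theorem proposition4 (n k : nat) (E : seq (nat * nat)) (s : seq bool) :
  simple_graph n E -> 3 <= k -> is_solution n k E s ->
  count id (encoding_part n k s) = k /\
  exists h : nat -> nat,
    (forall p, 1 <= p <= k -> 1 <= h p <= n /\ section n k p s = numstr n (h p)) /\
    (forall p q, 1 <= p -> p < q -> q <= k -> h p != h q /\ adjacent E (h p) (h q)).
Proof.
move=> hG hk [hs [HTc HC]].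
have hNk := Npairs_ge hk.
have L0 : 0 < Llen n k.
  rewrite /Llen /bval; have : 0 < Npairs k * (n * k - 2 * k + 2) by rewrite muln_gt0; lia.
  lia.
have hn : 2 <= n.
  have [off [h1 _]] := HC 1 2 (leqnn 1) (ltnSn 1) (ltnW hk).
  move: h1; rewrite hs; case hE : E => [|e E'].
    by rewrite /choice_string /=; lia.
  have := hG.2 e; rewrite hE mem_head => /(_ isT); lia.
have HT : Ssum (fun x => nth false s x != nth false (template n k) x) 0 (Llen n k) <= dval n k.
  have [off [h1 h2]] := HTc.
  rewrite size_template hs in h1.
  have off0 : off = 0 by lia.
  rewrite off0 drop0 hs take_oversize ?size_template // in h2.
  by rewrite -hs -hamming_S // size_template.
have [P12 P13] := pair_pos_12 hk.
have k2 : 2 <= k by lia.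
have [e12 he12 [a12 b12 Ho Hy12]] :=
  pair_all hG hk hn hs (leqnn 1) (ltnSn 1) k2 HT (HC 1 2 (leqnn 1) (ltnSn 1) k2).
have [e13 he13 [a13 b13 _ Hy13]] :=
  pair_all hG hk hn hs (leqnn 1) (isT : 1 < 3) hk HT (HC 1 3 (leqnn 1) (isT : 1 < 3) hk).
rewrite P12 /= mul0n mul1n in Hy12.
rewrite P13 /= mul1n in Hy13.
have Hsub : Ssum (fun z => nth false s (z + (FF n k + n * k))) 0 (2 * bval n k) <=
            Ssum (fun z => nth false s (z + (FF n k + n * k))) 0 (Npairs k * bval n k).
  apply: S_sub => //; rewrite leq_mul2r; apply/orP; right; case: hNk; lia.
rewrite (S_split _ (leq0n (bval n k)) (_ : bval n k <= 2 * bval n k)) in Hsub; last by lia.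
have ob0 : Ssum (fun z => nth false s (z + (FF n k + n * k))) 0 (Npairs k * bval n k) = 0.
  by lia.
rewrite ob0 addn0 in Ho.
have Henc : count id (encoding_part n k s) = k.
  rewrite /encoding_part -S_nth_size.
  have sz : size (take (n * k) (drop (FF n k) s)) = n * k.
    by rewrite size_takel // size_drop hs /Llen; lia.
  rewrite sz; apply: (eq_trans _ Ho); apply: S_ext => y /andP [_ hy].
  by rewrite nth_take // nth_drop addnC.
have pn : forall p, 1 <= p <= k -> (p - 1) * n + n <= n * k.
  move=> p hp; rewrite -mulSnr mulnC leq_mul2l; apply/orP; right; lia.
have sec_nth : forall p y, 1 <= p <= k -> y < n ->
    nth false (section n k p s) y = nth false s ((p - 1) * n + y + FF n k).
  move=> p y hp hy; have := pn p hp => hpn.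
  rewrite /section /encoding_part nth_take // nth_drop nth_take; last by lia.
  by rewrite nth_drop addnC.
have sec_size : forall p, 1 <= p <= k -> size (section n k p s) = n.
  move=> p hp; have := pn p hp => hpn.
  rewrite /section /encoding_part size_takel // size_drop size_takel; first by lia.
  by rewrite size_drop hs /Llen; lia.
have wit : forall p, 1 <= p <= k -> exists2 x, (p - 1) * n <= x < (p - 1) * n + n &
                                           nth false s (x + FF n k).
  move=> p /andP [p1 pk].
  case: (eqVneq p 1) => [->|pn1].
    exists ((1 - 1) * n + (e12.1 - 1)) => //.
    have [h1 [h2 h3]] := hG.2 e12 he12; lia.
  have p1' : 1 < p by lia.
  have [e he [_ b1 _ _]] :=
    pair_all hG hk hn hs (leqnn 1) p1' pk HT (HC 1 p (leqnn 1) p1' pk).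
  exists ((p - 1) * n + (e.2 - 1)) => //.
  have [h1 [h2 h3]] := hG.2 e he; lia.
have blk : forall p', p' < k ->
    1 <= Ssum (fun y => nth false s (y + FF n k)) (p' * n) (p' * n + n).
  move=> p' hp'; have hp1 : 1 <= p'.+1 <= k by lia.
  have [x hx gx] := wit p'.+1 hp1.
  by rewrite subn1 /= in hx; exact: (S_ge1 hx gx).
have secS : forall p, 1 <= p <= k ->
    Ssum (fun y => nth false s (y + FF n k)) ((p - 1) * n) ((p - 1) * n + n) <= 1.
  move=> p hp.
  have A1 : p - 1 <= Ssum (fun y => nth false s (y + FF n k)) (0 * n) ((0 + (p - 1)) * n).
    by apply: S_blocks_ge => p' hp'; apply: blk; lia.
  have A2 : k - p <= Ssum (fun y => nth false s (y + FF n k)) (p * n) ((p + (k - p)) * n).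
    by apply: S_blocks_ge => p' hp'; apply: blk; lia.
  rewrite mul0n add0n in A1.
  rewrite (_ : p + (k - p) = k) ?(mulnC k n) in A2; last by lia.
  have E1 : (p - 1) * n + n = p * n by rewrite -mulSnr; congr (_ * _); lia.
  have l1 : (p - 1) * n <= p * n by rewrite leq_mul2r; apply/orP; right; lia.
  have l2 : p * n <= n * k by rewrite mulnC leq_mul2l; apply/orP; right; lia.
  have := S_split (fun y => nth false s (y + FF n k)) (leq0n ((p - 1) * n)) (leq_trans l1 l2).
  have := S_split (fun y => nth false s (y + FF n k)) l1 l2.
  rewrite E1; lia.
have sec_shape : forall p x, 1 <= p <= k -> (p - 1) * n <= x < (p - 1) * n + n ->
    nth false s (x + FF n k) -> section n k p s = numstr n (x - (p - 1) * n).+1.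
  move=> p x hp hx gx.
  have hS : Ssum (fun y => nth false s ((p - 1) * n + y + FF n k)) 0 n <= 1.
    apply: leq_trans (secS p hp); apply: eq_leq.
    rewrite [in RHS](S_shift' _ (leq_addr n _)) addKn; apply: S_ext => y _.
    by rewrite /= (addnC y).

  apply: (@eq_from_nth _ false).
    by rewrite sec_size // size_numstr //; lia.
  move=> y; rewrite sec_size // => hy.
  rewrite sec_nth // nth_numstr; last by lia.
  have hu : x - (p - 1) * n < n by lia.
  have gu : nth false s ((p - 1) * n + (x - (p - 1) * n) + FF n k).
    by rewrite (_ : (p - 1) * n + (x - (p - 1) * n) = x) //; lia.
  rewrite /=; case: (boolP (nth false s ((p - 1) * n + y + FF n k))) => gy.
    have := @uniq_one (fun y => nth false s ((p - 1) * n + y + FF n k)) n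
               (x - (p - 1) * n) y hS hu hy gu gy.
    by move=> ->; rewrite eqxx.
  apply/esym/negbTE; apply/eqP => eyu; move: gy; by rewrite eyu gu.
pose h p := (index true (section n k p s)).+1.
have h_val : forall p x, 1 <= p <= k -> (p - 1) * n <= x < (p - 1) * n + n ->
    nth false s (x + FF n k) -> h p = (x - (p - 1) * n).+1.
  by move=> p x hp hx gx; rewrite /h (sec_shape p x hp hx gx) index_numstr.
split => //.
exists h; split.
  move=> p hp; have [x hx gx] := wit p hp.
  rewrite (h_val p x hp hx gx); split; first by lia.
  exact: sec_shape.
move=> p q hp hpq hq.
have [e he [a b _ _]] := pair_all hG hk hn hs hp hpq hq HT (HC p q hp hpq hq).
have [h1 [h2 h3]] := hG.2 e he.
have hp' : 1 <= p <= k by lia.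
have hq' : 1 <= q <= k by lia.
rewrite (h_val p _ hp' _ a); last by lia.
rewrite (h_val q _ hq' _ b); last by lia.
rewrite (_ : (p - 1) * n + (e.1 - 1) - (p - 1) * n = e.1 - 1); last by lia.
rewrite (_ : (q - 1) * n + (e.2 - 1) - (q - 1) * n = e.2 - 1); last by lia.
rewrite !subn1 !prednK; try lia.
split; first by apply/negP => /eqP; lia.
by rewrite /adjacent -surjective_pairing he.
Qed.
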